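(* There is no trajectory $(x,y,z)(\eta_1)$ of system (S2) such that, for some $\eta_{1,*}\in\mathbb{R}$, $x(\eta_1)>0$, $z(\eta_1)>0$, $y(\eta_1)<0$ for all $\eta_1>\eta_{1,*}$, and $$z(\eta_1)\to\infty,\qquad \frac{z(\eta_1)}{x(\eta_1)}\to\infty,\qquad \frac{y(\eta_1)}{z(\eta_1)}\to0,\qquad \eta_1\to\infty$$ (i.e. no trajectory enters the critical point at infinity $Q_4$ from the region $\{x>0,z>0,y<0\}$).
   Context: Let $N\geq1$, $m>1$, $\sigma>0$, $p>m$, $L=\sigma(m-1)+2(p-1)$, $\alpha=(\sigma+2)/L$, $\beta=(p-m)/L$. Positive profiles $f$ solve $(f^m)''+\frac{N-1}{\xi}(f^m)'+\alpha f+\beta\xi f'-\xi^\sigma f^p=0$. Setting $x=\frac{\alpha}{m}\xi^2f^{1-m}$, $y=\xi f'/f$, $z=\frac1m\xi^{\sigma+2}f^{p-m}$, $\eta_1=\ln\xi$, $(x,y,z)$ solves the autonomous system (S2): $$\dot x=x(2-(m-1)y),\quad \dot y=-x-(N-2)y+z-my^2-\tfrac{p-m}{\sigma+2}xy,\quad \dot z=z(\sigma+2+(p-m)y).$$ *)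

(* Defs.v *)
From Stdlib Require Import Reals.
From Coquelicot Require Import Coquelicot.
Open Scope R_scope.

Definition S2_fx (m : R) (x y z : R) : R := x * (2 - (m - 1) * y).
Definition S2_fy (N : nat) (m sigma p : R) (x y z : R) : R :=
  - x - (INR N - 2) * y + z - m * y ^ 2 - (p - m) / (sigma + 2) * x * y.
Definition S2_fz (m sigma p : R) (x y z : R) : R :=
  z * (sigma + 2 + (p - m) * y).

Definition S2_trajectory_on (N : nat) (m sigma p : R) (t0 : R)
  (x y z : R -> R) : Prop :=
  forall t, t0 < t ->
    is_derive x t (S2_fx m (x t) (y t) (z t)) /\
    is_derive y t (S2_fy N m sigma p (x t) (y t) (z t)) /\
    is_derive z t (S2_fz m sigma p (x t) (y t) (z t)).

(* Main.v *)
Require Import Defs.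
From Stdlib Require Import Reals Lra Psatz Classical.
From Coquelicot Require Import Coquelicot.
Open Scope R_scope.

Lemma lim_pinfty_ev (f : R -> R) : is_lim f p_infty p_infty ->
  forall M, exists T, forall t, T < t -> M < f t.
Proof.
  intros H M. apply (H (fun u => M < u)). exists M; auto.
Qed.

Lemma deriv_local f x l : is_derive f x l -> forall eps, 0 < eps ->
  exists del, 0 < del /\ forall h, 0 < Rabs h < del ->
    Rabs (f (x+h) - f x - l*h) <= eps * Rabs h.
Proof.
  intros H eps Heps. apply is_derive_Reals in H.
  destruct (H eps Heps) as [del Hd]. exists del. split. apply cond_pos.
  intros h [Hh1 Hh2].
  assert (hn : h <> 0). { intro E; subst. rewrite Rabs_R0 in Hh1. lra. }
  specialize (Hd h hn Hh2).
  replace (f (x+h) - f x - l*h) with (((f (x+h) - f x)/h - l) * h) by (field; auto).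
  rewrite Rabs_mult. apply Rmult_le_compat_r. apply Rabs_pos. lra.
Qed.

Lemma deriv_cont f x l : is_derive f x l -> continuity_pt f x.
Proof.
  intro H. apply is_derive_Reals in H.
  apply derivable_continuous_pt. exists l. exact H.
Qed.

Theorem lemma2p8 (N : nat) (m sigma p : R) :
  (1 <= N)%nat -> 1 < m -> 0 < sigma -> m < p ->
  ~ (exists (t0 eta_star : R) (x y z : R -> R),
        S2_trajectory_on N m sigma p t0 x y z /\
        t0 <= eta_star /\
        (forall t, eta_star < t -> 0 < x t /\ 0 < z t /\ y t < 0) /\
        is_lim z p_infty p_infty /\
        is_lim (fun t => z t / x t) p_infty p_infty /\
        is_lim (fun t => y t / z t) p_infty 0).
Proof.
  intros HN Hm Hs Hp [t0 [es [x [y [z [Htr [Hte [Hsg [Hz [Hzx _]]]]]]]]]].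
  set (c := (sigma+2)/(p-m)).
  assert (Hc : 0 < c) by (unfold c; apply Rdiv_lt_0_compat; lra).
  assert (Hcp : (p-m)*c = sigma+2) by (unfold c; field; lra).
  set (K := Rabs (INR N - 2) * c + m*c^2 + 1).
  destruct (lim_pinfty_ev z Hz (2*K)) as [T1 HT1].
  destruct (lim_pinfty_ev _ Hzx 2) as [T2 HT2].
  set (T := Rmax es (Rmax T1 T2)).
  assert (HTes : es <= T) by (unfold T; apply Rmax_l).
  assert (HT1' : T1 <= T) by (unfold T; eapply Rle_trans; [apply Rmax_l|apply Rmax_r]).
  assert (HT2' : T2 <= T) by (unfold T; eapply Rle_trans; [apply Rmax_r|apply Rmax_r]).
  assert (FactA : forall t, T < t -> -c <= y t ->
     1 <= S2_fy N m sigma p (x t) (y t) (z t)).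
  { intros t Ht Hy. destruct (Hsg t ltac:(lra)) as [Hx [Hzp Hyn]].
    pose proof (HT1 t ltac:(lra)) as Hz1. pose proof (HT2 t ltac:(lra)) as Hz2.
    assert (Hxz : 2 * x t < z t).
    { apply (Rmult_lt_compat_r (x t)) in Hz2; auto.
      unfold Rdiv in Hz2. rewrite Rmult_assoc, Rinv_l in Hz2; lra. }
    assert (Hk : 0 < (p-m)/(sigma+2)) by (apply Rdiv_lt_0_compat; lra).
    assert (Hkxy : (p-m)/(sigma+2) * x t * y t <= 0).
    { assert (0 < (p-m)/(sigma+2) * x t) by nra. nra. }
    assert (Hy2 : y t ^ 2 <= c^2) by nra.
    assert (Hab : (INR N - 2) * y t <= Rabs (INR N - 2) * c).
    { eapply Rle_trans. apply Rle_abs. rewrite Rabs_mult.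
      apply Rmult_le_compat_l. apply Rabs_pos.
      rewrite Rabs_left; lra. }
    assert (Hmy : m * y t ^ 2 <= m * c^2) by (apply Rmult_le_compat_l; lra).
    unfold S2_fy. unfold K in Hz1. lra. }
  assert (FactB : exists t1, T < t1 /\ -c <= y t1).
  { apply NNPP. intro Hn.
    assert (Hall : forall t, T < t -> y t < -c).
    { intros t Ht. apply Rnot_le_lt. intro H'. apply Hn. exists t. auto. }
    set (a := T + 1).
    destruct (lim_pinfty_ev z Hz (z a)) as [T3 HT3].
    set (b := Rmax T3 a + 1).
    assert (Hab : a < b) by (unfold b; pose proof (Rmax_r T3 a); lra).
    assert (Hzb : z a < z b) by (apply HT3; unfold b; pose proof (Rmax_l T3 a); lra).
    destruct (MVT_gen z a b (fun t => S2_fz m sigma p (x t) (y t) (z t))) as [xi [Hxi Heq]].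
    { intros u Hu. rewrite Rmin_left in Hu by lra. rewrite Rmax_right in Hu by lra.
      apply (Htr u). unfold a in Hu; lra. }
    { intros u Hu. rewrite Rmin_left in Hu by lra. rewrite Rmax_right in Hu by lra.
      eapply deriv_cont. apply (Htr u). unfold a in Hu; lra. }
    rewrite Rmin_left in Hxi by lra. rewrite Rmax_right in Hxi by lra.
    assert (Hxi' : T < xi) by (unfold a in Hxi; lra).
    destruct (Hsg xi ltac:(lra)) as [_ [Hzp _]].
    pose proof (Hall xi Hxi') as Hyx.
    assert (Hneg : S2_fz m sigma p (x xi) (y xi) (z xi) < 0).
    { unfold S2_fz. assert (sigma + 2 + (p-m) * y xi < 0) by nra. nra. }
    nra. }
  destruct FactB as [t1 [Ht1 Hy1]].
  assert (FactC : forall t2, t1 <= t2 -> -c <= y t2).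
  { intros t2 Ht2. apply Rnot_lt_le. intro Hy2.
    assert (Ht12 : t1 < t2) by (destruct (Rle_lt_or_eq_dec _ _ Ht2) as [H|H]; [exact H| subst; lra]).
    set (E := fun s => t1 <= s <= t2 /\ -c <= y s).
    destruct (completeness E) as [s [Hub Hlub]].
    { exists t2. intros u [[_ Hu] _]. exact Hu. }
    { exists t1. split; [lra|exact Hy1]. }
    assert (Hs1 : t1 <= s) by (apply Hub; split; [lra|exact Hy1]).
    assert (Hs2 : s <= t2) by (apply Hlub; intros u [[_ Hu] _]; exact Hu).
    assert (Hst : es < s) by lra.
    destruct (Htr s ltac:(lra)) as [_ [Hdy _]].
    set (d := S2_fy N m sigma p (x s) (y s) (z s)) in Hdy.
    destruct (Rlt_or_le (y s) (-c)) as [Hys|Hys].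
    - destruct (deriv_local _ _ _ Hdy 1 ltac:(lra)) as [del [Hdel Hloc]].
      assert (Hs1' : t1 < s) by (destruct (Rle_lt_or_eq_dec _ _ Hs1) as [H|H]; [exact H| subst; lra]).
      assert (Hd1 : 0 < Rabs d + 1) by (pose proof (Rabs_pos d); lra).
      set (h := Rmin (del/2) ((-c - y s)/(Rabs d + 1))).
      assert (Hh0 : 0 < h).
      { unfold h. apply Rmin_glb_lt. lra. apply Rdiv_lt_0_compat; lra. }
      assert (Hhd : h < del) by (unfold h; pose proof (Rmin_l (del/2) ((-c - y s)/(Rabs d + 1))); lra).
      assert (Hhc : h * (Rabs d + 1) <= -c - y s).
      { assert (h <= (-c - y s)/(Rabs d + 1)) by (unfold h; apply Rmin_r).
        apply (Rmult_le_compat_r (Rabs d + 1)) in H; [|lra].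
        unfold Rdiv in H. rewrite Rmult_assoc, Rinv_l in H; lra. }
      assert (Hub2 : is_upper_bound E (s - h)).
      { intros e He. apply Rnot_lt_le. intro Hlt.
        assert (Hes : e <= s) by (apply Hub; exact He).
        destruct He as [_ Hye].
        assert (Hne : e <> s) by (intro; subst; lra).
        set (k := e - s).
        assert (Hk : 0 < Rabs k < del) by (unfold k; rewrite Rabs_left; lra).
        pose proof (Hloc k Hk) as Hl.
        replace (s + k) with e in Hl by (unfold k; ring).
        assert (Habs : Rabs k < h) by (unfold k; rewrite Rabs_left; lra).
        assert (Hdk : d * k <= Rabs d * Rabs k).
        { rewrite <- Rabs_mult. apply Rle_abs. }
        assert (Hhc' : Rabs d * h + h <= -c - y s) by lra.
        pose proof (Rle_abs (y e - y s - d * k)).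
        assert (Rabs d * Rabs k <= Rabs d * h) by (apply Rmult_le_compat_l; [apply Rabs_pos|lra]).
        lra. }
      pose proof (Hlub _ Hub2). lra.
    - assert (Hs2' : s < t2) by (destruct (Rle_lt_or_eq_dec _ _ Hs2) as [H|H]; [exact H| subst; lra]).
      assert (Hd : 1 <= d) by (apply FactA; lra).
      destruct (deriv_local _ _ _ Hdy (1/2) ltac:(lra)) as [del [Hdel Hloc]].
      set (h := Rmin (del/2) (t2 - s)).
      assert (Hh0 : 0 < h) by (unfold h; apply Rmin_glb_lt; lra).
      assert (Hhd : h < del) by (unfold h; pose proof (Rmin_l (del/2) (t2 - s)); lra).
      assert (Hht : h <= t2 - s) by (unfold h; apply Rmin_r).
      assert (Hk : 0 < Rabs h < del) by (rewrite Rabs_right; lra).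
      pose proof (Hloc h Hk) as Hl. rewrite (Rabs_right h) in Hl by lra.
      pose proof (Rle_abs (-(y (s+h) - y s - d * h))). rewrite Rabs_Ropp in H.
      assert (HE : E (s + h)).
      { assert (d * h >= 1 * h) by (apply Rmult_ge_compat_r; lra).
        unfold E; split; lra. }
      pose proof (Hub _ HE). lra. }
  set (t := t1 + c + 1).
  destruct (MVT_gen y t1 t (fun u => S2_fy N m sigma p (x u) (y u) (z u))) as [xi [Hxi Heq]].
  { intros u Hu. rewrite Rmin_left in Hu by (unfold t; lra). rewrite Rmax_right in Hu by (unfold t; lra).
    apply (Htr u). lra. }
  { intros u Hu. rewrite Rmin_left in Hu by (unfold t; lra). rewrite Rmax_right in Hu by (unfold t; lra).
    eapply deriv_cont. apply (Htr u). lra. }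
  rewrite Rmin_left in Hxi by (unfold t; lra). rewrite Rmax_right in Hxi by (unfold t; lra).
  pose proof (FactA xi ltac:(lra) (FactC xi ltac:(lra))) as Hf.
  destruct (Hsg t ltac:(unfold t; lra)) as [_ [_ Hyt]].
  assert (Hpos : 0 < t - t1) by (unfold t; lra).
  assert (1 * (t - t1) <= S2_fy N m sigma p (x xi) (y xi) (z xi) * (t - t1))
    by (apply Rmult_le_compat_r; lra).
  unfold t in *. lra.
Qed.
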